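(* Consider the system $x_{k+1}=Ax_k+Bw_k$, $y^i_k=C^ix_k+D^iv^i_k$ ($i\in\mathcal V=\{1,\dots,N\}$) in the noise-free case, i.e. $\underline w=\overline w=0$ and $\underline v^i=\overline v^i=0$ for all $i$ (so $w_k=0$, $v^i_k=0$), and run the DIO (described in the context) with gains $L^i,\Gamma^i$ and $d\in\mathbb N$ network iterations. Then for every $k\ge0$ the collective framer error satisfies $e_{k+1}=H_k\hat A e_k$, where $\hat A=\mathrm{diag}(\hat A^1,\dots,\hat A^N)$, $\hat A^i=\begin{bmatrix}(\tilde A^i)^+ & (\tilde A^i)^-\\ (\tilde A^i)^- & (\tilde A^i)^+\end{bmatrix}$, and $H_k\in\{0,1\}^{2Nn\times 2Nn}$ is the matrix whose row $\underline{\mathrm{id}}(i,s)$ equals $\mathbf e^\top_{\underline{\mathrm{id}}(j^*,s)}$ with $j^*=\min\big(\arg\max_{j\in\mathcal N_i^d}(\underline x^{j,0}_{k+1})_s\big)$, and whose row $\overline{\mathrm{id}}(i,s)$ equals $\mathbf e^\top_{\overline{\mathrm{id}}(j^\dagger,s)}$ with $j^\dagger=\min\big(\arg\min_{j\in\mathcal N_i^d}(\overline x^{j,0}_{k+1})_s\big)$, for all $i\in\mathcal V$, $s\in\{1,\dots,n\}$. Moreover, $H_k\hat A\in\mathcal F$, where $\mathcal F$ is the set of matrices $M\in\mathbb R^{2Nn\times2Nn}$ such that for every $i\in\mathcal V$ and $s\in\{1,\dots,n\}$, row $\underline{\mathrm{id}}(i,s)$ of $M$ equals row $\underline{\mathrm{id}}(j,s)$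 of $\hat A$ for some $j\in\mathcal N_i^d$, and row $\overline{\mathrm{id}}(i,s)$ of $M$ equals row $\overline{\mathrm{id}}(j',s)$ of $\hat A$ for some $j'\in\mathcal N_i^d$ (so $\mathcal F$ has independent row uncertainties).
   Context: Entrywise inequalities, max, min; $M^+_{ij}=\max\{M_{ij},0\}$, $M^-=M^+-M$. $G=(\mathcal V,E)$ is a directed graph, $\mathcal N_i=\{j:(i,j)\in E\}\cup\{i\}$, $\mathcal N_i^d$ is the set of nodes reachable from $i$ by a directed path of length at most $d$ (including $i$). DIO: $T^i=I_n-\Gamma^iC^i$, $\tilde A^i=T^iA-L^iC^i$; initialize $\underline x^i_0=\underline x_0$, $\overline x^i_0=\overline x_0$; for each $k$, each agent computes (noise bounds being zero here) $\underline x^{i,0}_{k+1}=(\tilde A^i)^+\underline x^i_k-(\tilde A^i)^-\overline x^i_k+L^iy^i_k+\Gamma^iy^i_{k+1}$, $\overline x^{i,0}_{k+1}=(\tilde A^i)^+\overline x^i_k-(\tilde A^i)^-\underline x^i_k+L^iy^i_k+\Gamma^iy^i_{k+1}$, and then $\underline x^i_{k+1}=\max_{j\in\mathcal N_i^d}\underline x^{j,0}_{k+1}$, $\overline x^i_{k+1}=\min_{j\in\mathcal N_i^d}\overline x^{j,0}_{k+1}$ (obtained by $d$ rounds of max/min over $\mathcal N_i$). Errors: $\underline e^i_k=x_k-\underline x^i_k$, $\overline e^i_k=\overline x^i_k-x_k$, and $e_k=[(\underline e^1_k)^\top\ (\overline e^1_k)^\top\ \cdots\ (\underline e^N_k)^\top\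 (\overline e^N_k)^\top]^\top\in\mathbb R^{2Nn}$. Indices (1-based): $\underline{\mathrm{id}}(i,s)=2n(i-1)+s$, $\overline{\mathrm{id}}(i,s)=2n(i-1)+n+s$, the positions of $(\underline e^i)_s$ and $(\overline e^i)_s$ in $e$; $\mathbf e_m$ is the $m$-th standard basis vector of $\mathbb R^{2Nn}$. *)

(* Defs.v *)
From HB Require Import structures.
From mathcomp Require Import all_boot all_order all_algebra.
Set Implicit Arguments. Unset Strict Implicit. Unset Printing Implicit Defensive.
Import Order.TTheory GRing.Theory Num.Theory.
Local Open Scope ring_scope.

Definition pospart (R : realDomainType) m n (M : 'M[R]_(m, n)) : 'M[R]_(m, n) :=
  map_mx (fun a => Num.max a 0) M.
Definition negpart (R : realDomainType) m n (M : 'M[R]_(m, n)) : 'M[R]_(m, n) :=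
  pospart M - M.

Fixpoint walk_le (N : nat) (E : rel 'I_N) (d : nat) (i j : 'I_N) : bool :=
  match d with
  | 0 => i == j
  | d'.+1 => walk_le E d' i j || [exists l, E i l && walk_le E d' l j]
  end.

Definition Nd (N : nat) (E : rel 'I_N) (d : nat) (i : 'I_N) : {set 'I_N} :=
  [set j | walk_le E d i j].

(* Stacked indices (0-based): block i occupies positions i*2n .. i*2n+2n-1;
   lower component s is at i*2n+s, upper component s at i*2n+n+s. *)
Lemma stk_proof (N n : nat) (i : 'I_N) (r : 'I_(n + n)) :
  (i * (n + n) + r < N * (n + n))%N.
Proof.
have hi := ltn_ord i; have hr := ltn_ord r.
apply: (leq_trans (n := i * (n + n) + (n + n))); first by rewrite ltn_add2l.
by rewrite -[X in (_ + X <= _)%N]mul1n -mulnDl addn1 leq_mul2r hi orbT.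
Qed.

Definition stk (N n : nat) (i : 'I_N) (r : 'I_(n + n)) : 'I_(N * (n + n)) :=
  Ordinal (stk_proof i r).
Definition lid (N n : nat) (i : 'I_N) (s : 'I_n) := stk i (lshift n s).
Definition uid (N n : nat) (i : 'I_N) (s : 'I_n) := stk i (rshift n s).

Lemma blk_proof (N n : nat) (a : 'I_(N * (n + n))) : (a %/ (n + n) < N)%N.
Proof.
have ha : (nat_of_ord a < N * (n + n))%N := ltn_ord a.
move: (nat_of_ord a) ha => a' ha.
have hn : (0 < n + n)%N.
  by rewrite lt0n; apply/eqP => h; move: ha; rewrite h muln0.
by rewrite ltn_divLR.
Qed.

Lemma off_proof (N n : nat) (a : 'I_(N * (n + n))) : (a %% (n + n) < n + n)%N.
Proof.
have ha : (nat_of_ord a < N * (n + n))%N := ltn_ord a.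
move: (nat_of_ord a) ha => a' ha.
have hn : (0 < n + n)%N.
  by rewrite lt0n; apply/eqP => h; move: ha; rewrite h muln0.
by rewrite ltn_pmod.
Qed.

Definition blk (N n : nat) (a : 'I_(N * (n + n))) : 'I_N := Ordinal (blk_proof a).
Definition off (N n : nat) (a : 'I_(N * (n + n))) : 'I_(n + n) := Ordinal (off_proof a).

Section DIO.
Variables (R : realFieldType) (n N : nat) (p : 'I_N -> nat).
Variables (E : rel 'I_N) (d : nat).
Variables (A : 'M[R]_n) (C : forall i, 'M[R]_(p i, n)) (L Gam : forall i, 'M[R]_(n, p i)).
Variables (xl0 xu0 : 'cV[R]_n).
Variable (y : forall i, nat -> 'cV[R]_(p i)).

Definition Atil (i : 'I_N) : 'M[R]_n := (1%:M - Gam i *m C i) *m A - L i *m C i.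

Definition Ahat_i (i : 'I_N) : 'M[R]_(n + n) :=
  block_mx (pospart (Atil i)) (negpart (Atil i)) (negpart (Atil i)) (pospart (Atil i)).

Definition Ahat : 'M[R]_(N * (n + n)) :=
  \matrix_(a, b) (if blk a == blk b then Ahat_i (blk a) (off a) (off b) else 0).

(* local (pre-consensus) framers \underline x^{j,0}_{k+1}, \overline x^{j,0}_{k+1},
   from the current framers xl, xu at time k *)
Definition prel (xl xu : 'I_N -> 'cV[R]_n) (k : nat) (j : 'I_N) : 'cV[R]_n :=
  pospart (Atil j) *m xl j - negpart (Atil j) *m xu j + L j *m y j k + Gam j *m y j k.+1.
Definition preu (xl xu : 'I_N -> 'cV[R]_n) (k : nat) (j : 'I_N) : 'cV[R]_n :=
  pospart (Atil j) *m xu j - negpart (Atil j) *m xl j + L j *m y j k + Gam j *m y j k.+1.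

(* max / min over N_i^d (which contains i) *)
Definition nbmax (f : 'I_N -> R) (i : 'I_N) : R := \big[Num.max/f i]_(j in Nd E d i) f j.
Definition nbmin (f : 'I_N -> R) (i : 'I_N) : R := \big[Num.min/f i]_(j in Nd E d i) f j.

Fixpoint dio (k : nat) : ('I_N -> 'cV[R]_n) * ('I_N -> 'cV[R]_n) :=
  match k with
  | 0 => (fun _ => xl0, fun _ => xu0)
  | k'.+1 =>
      let xl := (dio k').1 in let xu := (dio k').2 in
      (fun i => \col_s nbmax (fun j => prel xl xu k' j s 0) i,
       fun i => \col_s nbmin (fun j => preu xl xu k' j s 0) i)
  end.

Definition xlow (i : 'I_N) (k : nat) : 'cV[R]_n := (dio k).1 i.
Definition xup (i : 'I_N) (k : nat) : 'cV[R]_n := (dio k).2 i.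
(* \underline x^{j,0}_{k+1} and \overline x^{j,0}_{k+1} *)
Definition xlow0 (j : 'I_N) (k : nat) : 'cV[R]_n := prel (dio k).1 (dio k).2 k j.
Definition xup0 (j : 'I_N) (k : nat) : 'cV[R]_n := preu (dio k).1 (dio k).2 k j.

Definition errvec (x : nat -> 'cV[R]_n) (k : nat) : 'cV[R]_(N * (n + n)) :=
  \col_a (col_mx (x k - xlow (blk a) k) (xup (blk a) k - x k)) (off a) 0.

Definition jstar (k : nat) (i : 'I_N) (s : 'I_n) : 'I_N :=
  let Am := [set j in Nd E d i | [forall j' in Nd E d i, xlow0 j' k s 0 <= xlow0 j k s 0]] in
  odflt i [pick j in Am | [forall j' in Am, (j <= j')%N]].
Definition jdag (k : nat) (i : 'I_N) (s : 'I_n) : 'I_N :=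
  let Am := [set j in Nd E d i | [forall j' in Nd E d i, xup0 j k s 0 <= xup0 j' k s 0]] in
  odflt i [pick j in Am | [forall j' in Am, (j <= j')%N]].

Definition Hsel (k : nat) : 'M[R]_(N * (n + n)) :=
  \matrix_(a, b)
    ((b == match split (off a) with
           | inl s => lid (jstar k (blk a) s) s
           | inr s => uid (jdag k (blk a) s) s
           end)%:R).

Definition inF (M : 'M[R]_(N * (n + n))) : Prop :=
  forall (i : 'I_N) (s : 'I_n),
    (exists2 j, j \in Nd E d i & row (lid i s) M = row (lid j s) Ahat) /\
    (exists2 j', j' \in Nd E d i & row (uid i s) M = row (uid j' s) Ahat).

End DIO.

(* Main.v *)
Require Import Defs.
From HB Require Import structures.
From mathcomp Require Import all_boot all_order all_algebra.
Import Order.TTheory GRing.Theory Num.Theory.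
Local Open Scope ring_scope.
From mathcomp Require Import ring.
Import Order.TTheory GRing.Theory Num.Theory.
Local Open Scope ring_scope.

Module Aux.
Set Implicit Arguments. Unset Strict Implicit.


Section H.
Variable R : realFieldType.
Variable N : nat.

Lemma hbigmax_att (S : {set 'I_N}) (f : 'I_N -> R) (i : 'I_N) : i \in S ->
  exists2 j, j \in S & \big[Num.max/f i]_(j in S) f j = f j.
Proof.
move=> hi; apply: (big_ind (fun v => exists2 j, j \in S & v = f j)).
- by exists i.
- move=> a b [ja ha ->] [jb hb ->]; case: (leP (f ja) (f jb)) => _.
  + by exists jb. + by exists ja.
- by move=> j hj; exists j.
Qed.

Lemma hbigmax_ge (S : {set 'I_N}) (f : 'I_N -> R) (i j : 'I_N) : j \in S ->
  f j <= \big[Num.max/f i]_(j in S) f j.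
Proof. by move=> hj; rewrite (bigD1 j) //= le_max lexx. Qed.

Lemma hbigmin_att (S : {set 'I_N}) (f : 'I_N -> R) (i : 'I_N) : i \in S ->
  exists2 j, j \in S & \big[Num.min/f i]_(j in S) f j = f j.
Proof.
move=> hi; apply: (big_ind (fun v => exists2 j, j \in S & v = f j)).
- by exists i.
- move=> a b [ja ha ->] [jb hb ->]; case: (leP (f ja) (f jb)) => _.
  + by exists ja. + by exists jb.
- by move=> j hj; exists j.
Qed.

Lemma hbigmin_le (S : {set 'I_N}) (f : 'I_N -> R) (i j : 'I_N) : j \in S ->
  \big[Num.min/f i]_(j in S) f j <= f j.
Proof. by move=> hj; rewrite (bigD1 j) //= ge_min lexx. Qed.

Lemma pick_minP (Am : {set 'I_N}) (i : 'I_N) : (exists j, j \in Am) ->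
  odflt i [pick j in Am | [forall j' in Am, (j <= j')%N]] \in Am.
Proof.
move=> [j0 hj0]; case: pickP => [j /andP [] //|hn].
exfalso; case: (arg_minnP (fun j : 'I_N => nat_of_ord j) hj0) => m hm hmin.
have hm2 : m \in Am := hm. move: (hn m) => /=; rewrite hm2 /= => /negbT /negP; apply; apply/forallP => j1; apply/implyP => h1; exact: hmin.
Qed.

Lemma walk_refl (E : rel 'I_N) d i : walk_le E d i i.
Proof. by elim: d => [|d IH] /=; rewrite ?eqxx ?IH. Qed.

Lemma Nd_refl (E : rel 'I_N) d i : i \in Nd E d i.
Proof. by rewrite inE walk_refl. Qed.
End H.


Lemma blk_stk N n (i : 'I_N) (r : 'I_(n+n)) : blk (stk i r) = i.
Proof.
apply: val_inj => /=; have hr := ltn_ord r.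
by rewrite divnMDl ?divn_small ?addn0 //; apply: leq_ltn_trans hr.
Qed.

Lemma off_stk N n (i : 'I_N) (r : 'I_(n+n)) : off (stk i r) = r.
Proof.
apply: val_inj => /=; have hr := ltn_ord r.
by rewrite modnMDl modn_small.
Qed.

Lemma stk_blk_off N n (a : 'I_(N * (n+n))) : stk (blk a) (off a) = a.
Proof. by apply: val_inj => /=; rewrite -divn_eq. Qed.

Lemma sum_stk (R : nmodType) N n (F : 'I_(N*(n+n)) -> R) :
  \sum_b F b = \sum_(j < N) \sum_(r < n + n) F (stk j r).
Proof.
rewrite pair_big /= (reindex (fun pr : 'I_N * 'I_(n+n) => stk pr.1 pr.2)) //=.
exists (fun a => (blk a, off a)) => [[j r] _|a _] /=.
  by rewrite blk_stk off_stk.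
by rewrite stk_blk_off.
Qed.


Lemma zid1 (R : comRingType) m n (a b c e f g : 'M[R]_(m,n)) :
  a - b + e + f - (c - g + e + f) = (a - c) + (g - b).
Proof. by apply/matrixP => i j; rewrite !mxE; ring. Qed.
Lemma zid2 (R : comRingType) m n (a b c e f g : 'M[R]_(m,n)) :
  (c - g + e + f) - (a - b + e + f) = (c - a) + (b - g).
Proof. by apply/matrixP => i j; rewrite !mxE; ring. Qed.

Section S.
Variables (R : realFieldType) (n N : nat) (p : 'I_N -> nat).
Variables (E : rel 'I_N) (d : nat).
Variables (A : 'M[R]_n) (C : forall i, 'M[R]_(p i, n)) (L Gam : forall i, 'M[R]_(n, p i)).
Variables (xl0 xu0 : 'cV[R]_n).
Variable (y : forall i, nat -> 'cV[R]_(p i)).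
Variable (x : nat -> 'cV[R]_n).
Hypothesis hx : forall k, x k.+1 = A *m x k.
Hypothesis hy : forall i k, y i k = C i *m x k.

Lemma pre_err j k : col_mx (x k.+1 - xlow0 E d A C L Gam xl0 xu0 y j k)
                           (xup0 E d A C L Gam xl0 xu0 y j k - x k.+1)
   = Ahat_i A C L Gam j *m col_mx (x k - xlow E d A C L Gam xl0 xu0 y j k)
                                  (xup E d A C L Gam xl0 xu0 y j k - x k).
Proof.
rewrite /Ahat_i mul_block_col /xlow0 /xup0 /prel /preu /xlow /xup.
set P := pospart _; set Q := negpart _.
have hPQ : P - Q = Atil A C L Gam j by rewrite /Q /negpart opprB addrC subrK.
have hAx : x k.+1 = (P - Q) *m x k + L j *m y j k + Gam j *m y j k.+1.
  rewrite hPQ /Atil !hy hx mulmxBl mulmxBl mul1mx !mulmxA.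
  by rewrite subrK mulmxBl subrK.
rewrite hAx mulmxBl.
by rewrite zid1 zid2 -!mulmxBr [in RHS](addrC (Q *m _)).
Qed.

Local Notation ev := (errvec E d A C L Gam xl0 xu0 y x).
Local Notation AH := (Ahat A C L Gam).

Lemma Ahat_e k j r : (AH *m ev k) (stk j r) 0 =
  (Ahat_i A C L Gam j *m col_mx (x k - xlow E d A C L Gam xl0 xu0 y j k)
                                  (xup E d A C L Gam xl0 xu0 y j k - x k)) r 0.
Proof.
rewrite !mxE sum_stk (bigD1 j) //= [X in _ + X = _]big1 ?addr0.
  apply: eq_bigr => r1 _; rewrite !mxE !blk_stk !off_stk eqxx.
  by rewrite /xlow /xup.
move=> j' hj'; apply: big1 => r' _; rewrite !mxE !blk_stk.
by rewrite eq_sym (negPf hj') mul0r.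
Qed.

Definition sel k (a : 'I_(N * (n + n))) :=
  match split (off a) with
  | inl s => lid (jstar E d A C L Gam xl0 xu0 y k (blk a) s) s
  | inr s => uid (jdag E d A C L Gam xl0 xu0 y k (blk a) s) s
  end.

Lemma Hsel_mul k m (M : 'M[R]_(N * (n + n), m)) a b :
  (Hsel E d A C L Gam xl0 xu0 y k *m M) a b = M (sel k a) b.
Proof.
rewrite !mxE (bigD1 (sel k a)) //= big1 ?addr0.
  by rewrite !mxE /sel eqxx mul1r.
by move=> c hc; rewrite !mxE -/(sel k a) (negPf hc) mul0r.
Qed.

Lemma jstar_spec k i s :
  let f := fun j => xlow0 E d A C L Gam xl0 xu0 y j k s 0 in
  jstar E d A C L Gam xl0 xu0 y k i s \in Nd E d i /\
  (forall j', j' \in Nd E d i -> f j' <= f (jstar E d A C L Gam xl0 xu0 y k i s)).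
Proof.
move=> f; rewrite /jstar.
set Am := [set j in Nd E d i | _].
have: odflt i [pick j in Am | [forall j' in Am, (j <= j')%N]] \in Am.
  apply: pick_minP.
  have [jm hjm he] := hbigmax_att f (Nd_refl E d i).
  exists jm; rewrite inE hjm /=; apply/forallP => j'; apply/implyP => hj'.
  by move: (hbigmax_ge f i hj'); rewrite he.
rewrite inE => /andP [h1 /forallP h2]; split => // j' hj'.
by move: (h2 j') => /implyP; apply.
Qed.

Lemma jdag_spec k i s :
  let f := fun j => xup0 E d A C L Gam xl0 xu0 y j k s 0 in
  jdag E d A C L Gam xl0 xu0 y k i s \in Nd E d i /\
  (forall j', j' \in Nd E d i -> f (jdag E d A C L Gam xl0 xu0 y k i s) <= f j').
Proof.
move=> f; rewrite /jdag.
set Am := [set j in Nd E d i | _].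
have: odflt i [pick j in Am | [forall j' in Am, (j <= j')%N]] \in Am.
  apply: pick_minP.
  have [jm hjm he] := hbigmin_att f (Nd_refl E d i).
  exists jm; rewrite inE hjm /=; apply/forallP => j'; apply/implyP => hj'.
  by move: (hbigmin_le f i hj'); rewrite he.
rewrite inE => /andP [h1 /forallP h2]; split => // j' hj'.
by move: (h2 j') => /implyP; apply.
Qed.

Lemma nbmax_jstar k i s :
  nbmax E d (fun j => xlow0 E d A C L Gam xl0 xu0 y j k s 0) i
  = xlow0 E d A C L Gam xl0 xu0 y (jstar E d A C L Gam xl0 xu0 y k i s) k s 0.
Proof.
have [h1 h2] := jstar_spec k i s.
rewrite /nbmax; apply/le_anti/andP; split; last exact: (hbigmax_ge _ _ h1).
have [jm hjm ->] := hbigmax_att (fun j => xlow0 E d A C L Gam xl0 xu0 y j k s 0) (Nd_refl E d i).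
exact: h2.
Qed.

Lemma nbmin_jdag k i s :
  nbmin E d (fun j => xup0 E d A C L Gam xl0 xu0 y j k s 0) i
  = xup0 E d A C L Gam xl0 xu0 y (jdag E d A C L Gam xl0 xu0 y k i s) k s 0.
Proof.
have [h1 h2] := jdag_spec k i s.
rewrite /nbmin; apply/le_anti/andP; split; first exact: (hbigmin_le _ _ h1).
have [jm hjm ->] := hbigmin_att (fun j => xup0 E d A C L Gam xl0 xu0 y j k s 0) (Nd_refl E d i).
exact: h2.
Qed.

Lemma split_l (s : 'I_n) : split (lshift n s) = inl s.
Proof. exact: (unsplitK (inl s)). Qed.
Lemma split_r (s : 'I_n) : split (rshift n s) = inr s.
Proof. exact: (unsplitK (inr s)). Qed.

Lemma entry_sub (u v : 'cV[R]_n) s : (u - v) s 0 = u s 0 - v s 0.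
Proof. by rewrite !mxE. Qed.

Lemma row_entry m (M : 'M[R]_(N * (n + n), m)) a b : row a M 0 b = M a b.
Proof. by rewrite mxE. Qed.

Lemma main k :
    ev k.+1 = Hsel E d A C L Gam xl0 xu0 y k *m AH *m ev k
    /\ inF E d A C L Gam (Hsel E d A C L Gam xl0 xu0 y k *m AH).
Proof.
split.
  apply/matrixP => a c; rewrite (ord1 c) -mulmxA Hsel_mul /sel.
  rewrite [LHS]mxE.
  case: splitP => s hs.
    have -> : off a = lshift n s by apply: val_inj.
    have e1 : xlow E d A C L Gam xl0 xu0 y (blk a) k.+1 s 0 =
       xlow0 E d A C L Gam xl0 xu0 y (jstar E d A C L Gam xl0 xu0 y k (blk a) s) k s 0.
      by rewrite /xlow /= mxE; exact: nbmax_jstar.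
    by rewrite /lid Ahat_e -pre_err !col_mxEu !entry_sub e1.
  have -> : off a = rshift n s by apply: val_inj.
  have e1 : xup E d A C L Gam xl0 xu0 y (blk a) k.+1 s 0 =
     xup0 E d A C L Gam xl0 xu0 y (jdag E d A C L Gam xl0 xu0 y k (blk a) s) k s 0.
    by rewrite /xup /= mxE; exact: nbmin_jdag.
  by rewrite /uid Ahat_e -pre_err !col_mxEd !entry_sub e1.
move=> i s; split.
  have [h1 _] := jstar_spec k i s.
  exists (jstar E d A C L Gam xl0 xu0 y k i s) => //.
  apply/rowP => b; rewrite !row_entry Hsel_mul /sel /lid blk_stk off_stk split_l //.
have [h1 _] := jdag_spec k i s.
exists (jdag E d A C L Gam xl0 xu0 y k i s) => //.
apply/rowP => b; rewrite !row_entry Hsel_mul /sel /uid blk_stk off_stk split_r //.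
Qed.
End S.

End Aux.
Import Aux.

Theorem lemma2 (R : realFieldType) (n N : nat) (mw : nat) (p q : 'I_N -> nat)
  (E : rel 'I_N) (d : nat)
  (A : 'M[R]_n) (B : 'M[R]_(n, mw))
  (C : forall i, 'M[R]_(p i, n)) (D : forall i, 'M[R]_(p i, q i))
  (L Gam : forall i, 'M[R]_(n, p i))
  (xl0 xu0 : 'cV[R]_n)
  (x : nat -> 'cV[R]_n) (w : nat -> 'cV[R]_mw) (v : forall i, nat -> 'cV[R]_(q i))
  (y : forall i, nat -> 'cV[R]_(p i))
  (hx : forall k, x k.+1 = A *m x k + B *m w k)
  (hy : forall i k, y i k = C i *m x k + D i *m v i k)
  (hw : forall k, w k = 0)
  (hv : forall i k, v i k = 0) :
  forall k : nat,
    errvec E d A C L Gam xl0 xu0 y x k.+1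
      = Hsel E d A C L Gam xl0 xu0 y k *m Ahat A C L Gam *m errvec E d A C L Gam xl0 xu0 y x k
    /\ inF E d A C L Gam (Hsel E d A C L Gam xl0 xu0 y k *m Ahat A C L Gam).
Proof.
have hx' : forall k, x k.+1 = A *m x k by move=> k; rewrite hx hw mulmx0 addr0.
have hy' : forall i k, y i k = C i *m x k by move=> i k; rewrite hy hv mulmx0 addr0.
move=> k; apply: main; [exact: hx' | exact: hy'].
Qed.
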